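(* Let $V$ be a real inner product space with induced norm $\lVert\cdot\rVert$. Let $a,b,a',b'\in V$ and $\gamma\ge0$ satisfy \[ \max\{\lVert x-y\rVert : x,y\in\{a,b,a',b'\}\}\le\gamma\le 2\lVert a-b\rVert+2\lVert a'-b'\rVert . \] Then, with $m=(a+b)/2$ and $m'=(a'+b')/2$, we have $\lVert m-m'\rVert\le\sqrt{\tfrac{31}{32}}\,\gamma$. *)

(* Defs.v *)
From HB Require Import structures.
From mathcomp Require Import all_boot all_order all_algebra.
From mathcomp Require Import reals.
Set Implicit Arguments. Unset Strict Implicit. Unset Printing Implicit Defensive.
Import Order.TTheory GRing.Theory Num.Theory.
Local Open Scope ring_scope.

Record inner_product (R : realType) (V : lmodType R) := InnerProduct {
  ip :> V -> V -> R;
  ipC : forall x y, ip x y = ip y x;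
  ipDl : forall x y z, ip (x + y) z = ip x z + ip y z;
  ipZl : forall (c : R) x y, ip (c *: x) y = c * ip x y;
  ip_ge0 : forall x, 0 <= ip x x;
  ip_eq0 : forall x, ip x x = 0 -> x = 0
}.

Definition ipnorm (R : realType) (V : lmodType R) (f : inner_product V) (x : V) : R :=
  Num.sqrt (f x x).

(* Main.v *)
Require Import Defs.
From HB Require Import structures.
From mathcomp Require Import all_boot all_order all_algebra.
From mathcomp Require Import reals.
From mathcomp Require Import ring lra.
Import Order.TTheory GRing.Theory Num.Theory.
Local Open Scope ring_scope.

Section Aux.
Variables (R : realType) (V : lmodType R) (f : inner_product V).

Lemma ipDr' x y z : f x (y + z) = f x y + f x z.
Proof. by rewrite ipC ipDl ipC [f z x]ipC. Qed.
Lemma ipNl' x y : f (- x) y = - f x y.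
Proof. by rewrite -scaleN1r ipZl mulN1r. Qed.
Lemma ipNr' x y : f x (- y) = - f x y.
Proof. by rewrite ipC ipNl' ipC. Qed.
Lemma ipZr' c x y : f x (c *: y) = c * f x y.
Proof. by rewrite ipC ipZl ipC. Qed.

Lemma sq_norm x : ipnorm f x ^+ 2 = f x x.
Proof. by rewrite /ipnorm sqr_sqrtr // ip_ge0. Qed.
Lemma norm_ge0 x : 0 <= ipnorm f x.
Proof. exact: sqrtr_ge0. Qed.
Lemma le_sq x g : ipnorm f x <= g -> f x x <= g ^+ 2.
Proof.
move=> H; rewrite -sq_norm; have := norm_ge0 x => H0.
by rewrite lerXn2r // nnegrE (le_trans H0 H).
Qed.
End Aux.

Theorem lemma3 (R : realType) (V : lmodType R) (ip : inner_product V)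
    (a b a' b' : V) (gamma : R) :
  0 <= gamma ->
  (forall x y, x \in [:: a; b; a'; b'] -> y \in [:: a; b; a'; b'] ->
     ipnorm ip (x - y) <= gamma) ->
  gamma <= 2 * ipnorm ip (a - b) + 2 * ipnorm ip (a' - b') ->
  let m := 2^-1 *: (a + b) in
  let m' := 2^-1 *: (a' + b') in
  ipnorm ip (m - m') <= Num.sqrt (31 / 32) * gamma.
Proof.
move=> g0 Hd Hg /=; set m := 2^-1 *: (a + b); set m' := 2^-1 *: (a' + b').
have Ma : a \in [:: a; b; a'; b'] by rewrite !inE eqxx ?orbT.
have Mb : b \in [:: a; b; a'; b'] by rewrite !inE eqxx ?orbT.
have Ma' : a' \in [:: a; b; a'; b'] by rewrite !inE eqxx ?orbT.
have Mb' : b' \in [:: a; b; a'; b'] by rewrite !inE eqxx ?orbT.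
have /le_sq H1 := Hd a a' Ma Ma'.
have /le_sq H2 := Hd a b' Ma Mb'.
have /le_sq H3 := Hd b a' Mb Ma'.
have /le_sq H4 := Hd b b' Mb Mb'.
have Hp := @sq_norm _ _ ip (a - b).
have Hq := @sq_norm _ _ ip (a' - b').
have p0 := @norm_ge0 _ _ ip (a - b).
have q0 := @norm_ge0 _ _ ip (a' - b').
have Hid : 4 * ip (m - m') (m - m') + ip (a - b) (a - b) + ip (a' - b') (a' - b')
   = ip (a - a') (a - a') + ip (a - b') (a - b') + ip (b - a') (b - a') + ip (b - b') (b - b').
  rewrite /m /m' !(ipDl, ipNl', ipZl, ipDr', ipNr', ipZr').
  rewrite ?(@ipC _ _ ip b a) ?(@ipC _ _ ip a' a) ?(@ipC _ _ ip b' a) ?(@ipC _ _ ip a' b) ?(@ipC _ _ ip b' b) ?(@ipC _ _ ip b' a').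
  by field.
set D := ip (m - m') (m - m') in Hid *.
have D0 : 0 <= D by apply: ip_ge0.
have HD : D <= 31 / 32 * gamma ^+ 2.
  move: Hp Hq Hid; set p := ipnorm ip (a - b); set q := ipnorm ip (a' - b').
  move=> Hp Hq Hid.
  have G2 := ler_pM g0 g0 Hg Hg.
  have PQ : 0 <= (p - q) ^+ 2 by apply: sqr_ge0.
  have : gamma ^+ 2 <= 8 * (p ^+ 2 + q ^+ 2).
    rewrite expr2; apply: (le_trans G2); rewrite -subr_ge0.
    have -> : 8 * (p ^+ 2 + q ^+ 2) - (2 * p + 2 * q) * (2 * p + 2 * q) = 4 * (p - q) ^+ 2 by ring.
    by rewrite mulr_ge0.
  rewrite Hp Hq; lra.
rewrite /ipnorm -/D.
rewrite -(ger0_norm g0) -sqrtr_sqr -sqrtrM; last by lra.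
by rewrite ler_sqrt //; lra.
Qed.
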